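(* Let $E$ be a finite set and $\mathcal{W} \subseteq \{+,-,0\}^E$. Then $\mathcal{W}$ is an affine oriented matroid if and only if $\mathcal{W}$ satisfies the following three axioms: (A1) if $X,Y \in \mathcal{W}$ then $X \circ Y \in \mathcal{W}$ and $X \circ (-Y) \in \mathcal{W}$; (A2) if $X,Y \in \mathcal{W}$ with $\underline{X}=\underline{Y}$, then $I_e(X,Y) \cap \mathcal{W} \neq \emptyset$ for every $e \in S(X,Y)$; (A3) $\mathcal{P}(\mathcal{W}) \circ \mathcal{W} \subseteq \mathcal{W}$.
   Context: A sign vector on a finite set $E$ is an element $X \in \{+,-,0\}^E$; write $X^{+}=\{e: X_e=+\}$, $X^-=\{e:X_e=-\}$, support $\underline{X}=X^+\cup X^-$. The opposite $-X$ has $(-X)_e=-X_e$. Composition: $(X\circ Y)_e = X_e$ if $X_e\neq 0$ and $Y_e$ otherwise. Separation set: $S(X,Y)=(X^+\cap Y^-)\cup(X^-\cap Y^+)$. For sets $\mathcal{A},\mathcal{B}$ of sign vectors, $\mathcal{A}\circ\mathcal{B}=\{A\circ B: A\in\mathcal{A},B\in\mathcal{B}\}$. A set $\mathcal{O}\subseteq\{+,-,0\}^{F}$ is (the covector set of) an oriented matroid on $F$ if: (O1) the zero vector lies in $\mathcal{O}$; (O2) $X\in\mathcal{O}\Rightarrow -X\in\mathcal{O}$; (O3) $X,Y\in\mathcal{O}\Rightarrow X\circ Y\in\mathcal{O}$; (O4) if $X,Y\in\mathcal{O}$ with $\underline{X}=\underline{Y}$ and $e\in S(X,Y)$, there is $Z\in\mathcal{O}$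 with $Z_e=0$ and $Z_f=(X\circ Y)_f=(Y\circ X)_f$ for all $f\notin S(X,Y)$. $\mathcal{W}\subseteq\{+,-,0\}^E$ is an affine oriented matroid if there exist an element $g\notin E$ and an oriented matroid $\mathcal{O}$ on $E\cup\{g\}$ such that $\mathcal{W}=\{X|_E : X\in\mathcal{O},\ X_g=+\}$. For $X,Y$ with $\underline{X}=\underline{Y}$ and $X\neq Y$, and $e\in S(X,Y)$: $I_e(X,Y)=\{V\in\{+,-,0\}^E : \underline{V}\subseteq \underline{X}\setminus\{e\},\ V_f=X_f \text{ for all } f\notin S(X,Y)\}$, and $I(X,Y)=\bigcup_{e\in S(X,Y)} I_e(X,Y)$. Sum: $(X+Y)_e=0$ if $e\in S(X,Y)$, and $(X+Y)_e=(X\circ Y)_e$ otherwise. For $\mathcal{W}\subseteq\{+,-,0\}^E$: $\mathrm{sym}(\mathcal{W})=\{V: V\in\mathcal{W}, -V\in\mathcal{W}\}$, $\mathrm{asym}(\mathcal{W})=\{V\in\mathcal{W}: -V\notin\mathcal{W}\}$, and $\mathcal{P}(\mathcal{W})=\{X+(-Y): X,Y\in\mathrm{asym}(\mathcal{W}),\ \underline{X}=\underline{Y},\ I(X,-Y)\cap\mathcal{W}=I(-X,Y)\cap\mathcal{W}=\emptyset\}$. *)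

(* Defs.v *)
From HB Require Import structures.
From mathcomp Require Import all_boot.
Set Implicit Arguments. Unset Strict Implicit. Unset Printing Implicit Defensive.

Inductive sign := Pos | Neg | Zer.

Definition sign_enc (s : sign) : 'I_3 :=
  match s with Pos => inord 0 | Neg => inord 1 | Zer => inord 2 end.
Definition sign_dec (i : 'I_3) : sign :=
  match val i with 0 => Pos | 1 => Neg | _ => Zer end.
Lemma sign_encK : cancel sign_enc sign_dec.
Proof. by case; rewrite /sign_dec /= inordK. Qed.
HB.instance Definition _ := Finite.copy sign (can_type sign_encK).

Definition sopp (s : sign) : sign :=
  match s with Pos => Neg | Neg => Pos | Zer => Zer end.

Notation svec E := {ffun E -> sign}.

Section SignVectors.
Variable E : finType.
Implicit Types (X Y V : svec E) (W A B : {set svec E}).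

Definition sv_opp X : svec E := [ffun e => sopp (X e)].
Definition sv_comp X Y : svec E := [ffun e => if X e != Zer then X e else Y e].
Definition supp X : {set E} := [set e | X e != Zer].
Definition sep X Y : {set E} :=
  [set e | ((X e == Pos) && (Y e == Neg)) || ((X e == Neg) && (Y e == Pos))].
Definition set_comp A B : {set svec E} := [set sv_comp a b | a in A, b in B].

(* Oriented matroid (covector axioms O1-O4). *)
Definition is_OM (O : {set svec E}) : Prop :=
  [/\ [ffun _ => Zer] \in O,
      (forall X, X \in O -> sv_opp X \in O),
      (forall X Y, X \in O -> Y \in O -> sv_comp X Y \in O) &
      (forall X Y, X \in O -> Y \in O -> supp X = supp Y ->
         forall e, e \in sep X Y ->
         exists2 Z, Z \in O &
           Z e = Zer /\
           (forall f, f \notin sep X Y -> Z f = sv_comp X Y f /\ Z f = sv_comp Y X f))].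

Definition Ie (e : E) X Y : {set svec E} :=
  [set V | (supp V \subset supp X :\ e) && [forall f, (f \notin sep X Y) ==> (V f == X f)]].
Definition Iset X Y : {set svec E} := \bigcup_(e in sep X Y) Ie e X Y.

Definition sv_sum X Y : svec E :=
  [ffun e => if e \in sep X Y then Zer else sv_comp X Y e].

Definition sym W : {set svec E} := [set V in W | sv_opp V \in W].
Definition asym W : {set svec E} := [set V in W | sv_opp V \notin W].

Definition Pset W : {set svec E} :=
  [set sv_sum X (sv_opp Y) | X in asym W, Y in asym W &
     [&& supp X == supp Y, Iset X (sv_opp Y) :&: W == set0 &
         Iset (sv_opp X) Y :&: W == set0]].

Definition axA1 W : Prop :=
  forall X Y, X \in W -> Y \in W -> sv_comp X Y \in W /\ sv_comp X (sv_opp Y) \in W.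
Definition axA2 W : Prop :=
  forall X Y, X \in W -> Y \in W -> supp X = supp Y ->
    forall e, e \in sep X Y -> Ie e X Y :&: W != set0.
Definition axA3 W : Prop := set_comp (Pset W) W \subset W.

End SignVectors.

(* Affine oriented matroid: the extra element g is modelled by None in option E. *)
Definition restrict_some (E : finType) (X : svec (option E)) : svec E :=
  [ffun e => X (Some e)].

Definition affine_OM (E : finType) (W : {set svec E}) : Prop :=
  exists O : {set svec (option E)}, is_OM O /\
    W = [set restrict_some X | X in O & X None == Pos].

(* Main.v *)
Require Import Defs.
From HB Require Import structures.
From mathcomp Require Import all_boot.
Set Implicit Arguments. Unset Strict Implicit. Unset Printing Implicit Defensive.

Definition seqb (a b : sign) := match a, b with Pos,Pos|Neg,Neg|Zer,Zer => true | _,_ => false end.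
Lemma signeqE (a b : sign) : (a == b) = seqb a b.
Proof. by case: a; case: b; rewrite ?eqxx //; apply/eqP. Qed.
Definition sepb (a b : sign) := match a, b with Pos,Neg|Neg,Pos => true | _,_ => false end.
Definition scomp (a b : sign) := if a is Zer then b else a.

Ltac sgfin := intros; simpl in *; repeat match goal with
  | H : is_true true -> _ |- _ => specialize (H isT)
  | H : is_true false -> _ |- _ => clear H
  | H : ?x = ?x -> _ |- _ => specialize (H erefl)
  | H : true = false -> _ |- _ => clear H
  | H : false = true -> _ |- _ => clear H
  end; try discriminate; try done.

Section Base.
Variable E : finType.
Implicit Types (X Y Z V U : svec E).

Lemma suppE X f : (f \in supp X) = (X f != Zer).
Proof. by rewrite inE. Qed.
Lemma sepE X Y f : (f \in sep X Y) = sepb (X f) (Y f).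
Proof. by rewrite inE !signeqE; case: (X f); case: (Y f) => //=. Qed.
Lemma compE X Y f : sv_comp X Y f = scomp (X f) (Y f).
Proof. by rewrite ffunE signeqE; case: (X f). Qed.
Lemma oppE X f : sv_opp X f = sopp (X f).
Proof. by rewrite ffunE. Qed.
Lemma sumE X Y f : sv_sum X Y f = if sepb (X f) (Y f) then Zer else scomp (X f) (Y f).
Proof. by rewrite ffunE sepE compE. Qed.

Lemma oppK X : sv_opp (sv_opp X) = X.
Proof. by apply/ffunP => f; rewrite !oppE; case: (X f). Qed.
Lemma supp_opp X : supp (sv_opp X) = supp X.
Proof. by apply/setP => f; rewrite !suppE oppE !signeqE; case: (X f). Qed.
Lemma opp_comp X Y : sv_opp (sv_comp X Y) = sv_comp (sv_opp X) (sv_opp Y).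
Proof. by apply/ffunP => f; rewrite !(oppE, compE); case: (X f); case: (Y f). Qed.
Lemma compA X Y Z : sv_comp X (sv_comp Y Z) = sv_comp (sv_comp X Y) Z.
Proof. by apply/ffunP => f; rewrite !compE; case: (X f); case: (Y f). Qed.
Lemma sep_sym X Y : sep X Y = sep Y X.
Proof. by apply/setP => f; rewrite !sepE; case: (X f); case: (Y f). Qed.
Lemma sep_opp X Y : sep (sv_opp X) (sv_opp Y) = sep X Y.
Proof. by apply/setP => f; rewrite !sepE !oppE; case: (X f); case: (Y f). Qed.
Lemma sep_oppr X Y : sep X (sv_opp Y) = sep (sv_opp X) Y.
Proof. by apply/setP => f; rewrite !sepE !oppE; case: (X f); case: (Y f). Qed.

Lemma suppP X Y : supp X = supp Y -> forall f, (X f == Zer) = (Y f == Zer).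
Proof.
move=> H f; have := congr1 (fun A : {set E} => f \in A) H.
by rewrite !suppE => /negb_inj.
Qed.

Lemma agree X Y f : supp X = supp Y -> f \notin sep X Y -> Y f = X f.
Proof.
move=> /suppP /(_ f); rewrite sepE !signeqE.
by case: (X f); case: (Y f).
Qed.

Lemma IeE e X Y V : V \in Ie e X Y <-> V e = Zer /\ (forall f, f \notin sep X Y -> V f = X f).
Proof.
rewrite inE; split.
- case/andP => /subsetP Hs /forallP Hf; split.
  + apply/eqP; apply: contraT => He.
    by move: (Hs e); rewrite suppE He => /(_ isT); rewrite !inE eqxx.
  + by move=> f Hf'; move: (Hf f); rewrite Hf' /= => /eqP.
- case=> He Hf; apply/andP; split.
  + apply/subsetP => f; rewrite suppE !inE => Hv.
    apply/andP; split.
    * by apply: contraNneq Hv => ->; rewrite He.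
    * case Hs: (f \in sep X Y).
      - by move: Hs; rewrite sepE signeqE; case: (X f); case: (Y f).
      - by rewrite -(Hf f) ?Hs.
  + by apply/forallP => f; apply/implyP => /Hf ->.
Qed.

Lemma Ie_swap e X Y : supp X = supp Y -> Ie e Y X = Ie e X Y.
Proof.
move=> Hs; have Hs' := esym Hs.
apply/setP => V; apply/idP/idP => /IeE [H1 H2]; apply/IeE; split => // f Hf.
- have Hf' : f \notin sep Y X by rewrite sep_sym.
  by rewrite (H2 f Hf') (agree Hs).
- have Hf' : f \notin sep X Y by rewrite sep_sym.
  by rewrite (H2 f Hf') (agree Hs').
Qed.

Lemma Iset_swap X Y : supp X = supp Y -> Iset Y X = Iset X Y.
Proof.
move=> Hs; rewrite /Iset sep_sym; apply: eq_bigr => e _.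
exact: Ie_swap.
Qed.

Lemma suppP' X Y : supp X = supp Y -> forall f, seqb (X f) Zer = seqb (Y f) Zer.
Proof. by move=> /suppP H f; rewrite -!signeqE H. Qed.

Lemma shrink X Y V1 e1 : supp X = supp Y -> V1 \in Ie e1 X (sv_opp Y) -> e1 \in sep X (sv_opp Y) ->
  [/\ supp (sv_comp V1 (sv_opp Y)) = supp Y,
      #|sep (sv_comp V1 (sv_opp Y)) (sv_opp Y)| < #|sep X (sv_opp Y)|,
      (forall f, f \in sep (sv_comp V1 (sv_opp Y)) (sv_opp Y) -> f \in sep X (sv_opp Y)) &
      forall f, f \notin sep X (sv_opp Y) -> sv_comp V1 (sv_opp Y) f = X f].
Proof.
move=> Hs /IeE [H1 H2] He1.
have Hsub : forall f, f \in sep (sv_comp V1 (sv_opp Y)) (sv_opp Y) -> f \in sep X (sv_opp Y).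
  move=> f; move: (suppP' Hs f) (H2 f); rewrite !(sepE, compE, oppE).
  by case: (X f); case: (Y f); case: (V1 f); sgfin.
have Hag : forall f, f \notin sep X (sv_opp Y) -> sv_comp V1 (sv_opp Y) f = X f.
  move=> f; move: (suppP' Hs f) (H2 f); rewrite !(sepE, compE, oppE).
  by case: (X f); case: (Y f); case: (V1 f); sgfin.
split => //.
- apply/setP => f; rewrite !suppE compE oppE !signeqE.
  move: (suppP' Hs f) (H2 f); rewrite !(sepE, oppE).
  by case: (X f); case: (Y f); case: (V1 f); sgfin.
- apply: proper_card; apply/properP; split; first by apply/subsetP.
  exists e1 => //; move: He1; rewrite !(sepE, compE, oppE) H1.
  by case: (X e1); case: (Y e1); sgfin.
Qed.

Lemma sep_swapo X Y : sep Y (sv_opp X) = sep X (sv_opp Y).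
Proof. by rewrite sep_sym sep_oppr. Qed.

Lemma shrink2 X Y V1 e1 : supp X = supp Y -> V1 \in Ie e1 (sv_opp X) Y -> e1 \in sep X (sv_opp Y) ->
  [/\ supp (sv_comp V1 (sv_opp X)) = supp X,
      #|sep X (sv_opp (sv_comp V1 (sv_opp X)))| < #|sep X (sv_opp Y)|,
      (forall f, f \in sep X (sv_opp (sv_comp V1 (sv_opp X))) -> f \in sep X (sv_opp Y)) &
      forall f, f \notin sep X (sv_opp Y) -> sv_comp V1 (sv_opp X) f = Y f].
Proof.
move=> Hs HV He.
have Hs' := esym Hs.
rewrite -Ie_swap in HV; last by rewrite supp_opp.
rewrite -sep_swapo in He.
case: (shrink Hs' HV He) => H1 H2 H3 H4.
rewrite !(sep_swapo X) in H2 H3.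
split => // f.
by rewrite -(sep_swapo X Y); exact: H4.
Qed.

Definition extv (s : sign) (X : svec E) : svec (option E) :=
  [ffun o => if o is Some e then X e else s].

Lemma restrict_ext s X : restrict_some (extv s X) = X.
Proof. by apply/ffunP => f; rewrite !ffunE /=. Qed.
Lemma ext_None s X : extv s X None = s.
Proof. by rewrite ffunE. Qed.
Lemma ext_Some s X f : extv s X (Some f) = X f.
Proof. by rewrite ffunE. Qed.
Lemma restrictE (Z : svec (option E)) f : restrict_some Z f = Z (Some f).
Proof. by rewrite ffunE. Qed.
Lemma ext_restrict (Z : svec (option E)) : extv (Z None) (restrict_some Z) = Z.
Proof. by apply/ffunP => -[f|]; rewrite !ffunE /=. Qed.
Lemma restrict_comp (Z1 Z2 : svec (option E)) :
  restrict_some (sv_comp Z1 Z2) = sv_comp (restrict_some Z1) (restrict_some Z2).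
Proof. by apply/ffunP => f; rewrite !ffunE. Qed.
Lemma restrict_opp (Z : svec (option E)) : restrict_some (sv_opp Z) = sv_opp (restrict_some Z).
Proof. by apply/ffunP => f; rewrite !ffunE. Qed.
Lemma sep_Some (Z1 Z2 : svec (option E)) f :
  (Some f \in sep Z1 Z2) = (f \in sep (restrict_some Z1) (restrict_some Z2)).
Proof. by rewrite !inE !ffunE. Qed.
Lemma supp_restrict (Z1 Z2 : svec (option E)) : supp Z1 = supp Z2 ->
  supp (restrict_some Z1) = supp (restrict_some Z2).
Proof.
move=> H; apply/setP => f; rewrite !inE !ffunE.
by have := congr1 (fun A : {set option E} => Some f \in A) H; rewrite !inE.
Qed.
Lemma supp_None (Z1 Z2 : svec (option E)) : supp Z1 = supp Z2 -> seqb (Z1 None) Zer = seqb (Z2 None) Zer.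
Proof.
move=> H; have := congr1 (fun A : {set option E} => None \in A) H; rewrite !inE !signeqE.
by case: (Z1 None); case: (Z2 None).
Qed.
Lemma supp_ext s1 s2 X Y : seqb s1 Zer = seqb s2 Zer -> supp X = supp Y ->
  supp (extv s1 X) = supp (extv s2 Y).
Proof.
move=> H1 H2; apply/setP => -[f|]; rewrite !inE !ffunE.
- by have := congr1 (fun A : {set E} => f \in A) H2; rewrite !inE.
- by rewrite !signeqE H1.
Qed.

Lemma comp_agree X Y f : supp X = supp Y -> f \notin sep X Y -> sv_comp X Y f = X f.
Proof.
move=> H; move: (suppP' H f); rewrite compE sepE.
by case: (X f); case: (Y f).
Qed.

Lemma sum_agree X Y f : supp X = supp Y -> f \notin sep X (sv_opp Y) ->
  sv_sum X (sv_opp Y) f = X f.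
Proof.
move=> Hs; move: (suppP' Hs f); rewrite sumE !(sepE, oppE).
by case: (X f); case: (Y f); sgfin.
Qed.

Lemma sum_zero X Y f : f \in sep X (sv_opp Y) -> sv_sum X (sv_opp Y) f = Zer.
Proof. by rewrite sumE sepE => ->. Qed.

End Base.

Section Hard.
Variable E : finType.
Variable W : {set svec E}.
Hypothesis HA1 : axA1 W.
Hypothesis HA2 : axA2 W.
Hypothesis HA3 : axA3 W.
Implicit Types (X Y Z V U : svec E).

Definition Lset : {set svec E} :=
  [set V | [forall X in W, (sv_comp V X \in W) && (sv_comp (sv_opp V) X \in W)]].

Lemma LsetP V : V \in Lset <-> forall X, X \in W -> sv_comp V X \in W /\ sv_comp (sv_opp V) X \in W.
Proof.
rewrite inE; split.
- by move=> /forallP H X HX; move: (H X); rewrite HX /= => /andP.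
- by move=> H; apply/forallP => X; apply/implyP => /H [-> ->].
Qed.

Lemma compW X Y : X \in W -> Y \in W -> sv_comp X Y \in W.
Proof. by move=> HX HY; case: (HA1 HX HY). Qed.
Lemma compoW X Y : X \in W -> Y \in W -> sv_comp X (sv_opp Y) \in W.
Proof. by move=> HX HY; case: (HA1 HX HY). Qed.

Lemma A2' X Y e : X \in W -> Y \in W -> supp X = supp Y -> e \in sep X Y ->
  exists U, [/\ U \in W, U e = Zer & forall f, f \notin sep X Y -> U f = X f].
Proof.
move=> HX HY Hs He; have /set0Pn [U] := HA2 HX HY Hs He.
by rewrite inE => /andP [/IeE [H1 H2] HU]; exists U.
Qed.

Lemma L_opp V : V \in Lset -> sv_opp V \in Lset.
Proof. by move=> /LsetP H; apply/LsetP => X /H; rewrite oppK => -[]. Qed.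

Lemma sym_L V : V \in W -> sv_opp V \in W -> V \in Lset.
Proof. by move=> H1 H2; apply/LsetP => X HX; split; apply: compW. Qed.

Lemma Pset_opp p : p \in Pset W -> sv_opp p \in Pset W.
Proof.
case/imset2P => X Y HX; rewrite !inE => /andP [HY /and3P [/eqP Hs H1 H2]] ->.
have -> : sv_opp (sv_sum X (sv_opp Y)) = sv_sum Y (sv_opp X).
  apply/ffunP => f; rewrite oppE !sumE !oppE.
  move: (suppP Hs f); rewrite !signeqE.
  by case: (X f); case: (Y f).
move: HX; rewrite inE => /andP [HX HXn].
apply/imset2P; exists Y X => //; first by rewrite inE.
rewrite !inE HX HXn Hs eqxx /=.
rewrite (Iset_swap (X:=sv_opp X) (Y:=Y)); last by rewrite supp_opp.
rewrite (Iset_swap (X:=X) (Y:=sv_opp Y)); last by rewrite supp_opp.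
by rewrite H1 H2.
Qed.

Lemma Pset_L p : p \in Pset W -> p \in Lset.
Proof.
move=> Hp; apply/LsetP => X HX; split.
- exact: (subsetP HA3) (imset2_f _ Hp HX).
- exact: (subsetP HA3) (imset2_f _ (Pset_opp Hp) HX).
Qed.

Lemma Pset_intro X Y : X \in W -> Y \in W -> sv_opp X \notin W -> sv_opp Y \notin W ->
  supp X = supp Y -> Iset X (sv_opp Y) :&: W == set0 -> Iset (sv_opp X) Y :&: W == set0 ->
  sv_sum X (sv_opp Y) \in Pset W.
Proof.
move=> HX HY HXn HYn Hs H1 H2; apply/imset2P; exists X Y => //; first by rewrite inE HX HXn.
by rewrite !inE HY HYn Hs eqxx H1 H2.
Qed.

Lemma IsetW X Y : Iset X Y :&: W != set0 ->
  exists V e, [/\ V \in W, e \in sep X Y & V \in Ie e X Y].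
Proof.
case/set0Pn => V; rewrite inE => /andP [/bigcupP [e He HV] HVW].
by exists V, e.
Qed.

Lemma C2 X Y : X \in W -> Y \in W -> supp X = supp Y ->
  exists V, V \in Lset /\ forall f, f \notin sep X (sv_opp Y) -> V f = X f.
Proof.
have [n] := ubnP #|sep X (sv_opp Y)|; elim: n X Y => // n IH X Y Hn HX HY Hs.
case: (boolP (sv_opp X \in W)) => HXn.
  by exists X; split => //; apply: sym_L.
case: (boolP (sv_opp Y \in W)) => HYn.
  exists (sv_opp Y); split; first by apply: sym_L; rewrite ?oppK.
  by move=> f Hf; apply: agree => //; rewrite supp_opp.
case: (boolP (Iset X (sv_opp Y) :&: W == set0)) => H1; last first.
  case: (IsetW H1) => V1 [e1 [HV1 He1 HIe]].
  case: (shrink Hs HIe He1) => S1 S2 S3 S4.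
  have HX' := compoW HV1 HY.
  have [V [HV HVa]] := IH _ _ (leq_trans S2 Hn) HX' HY S1.
  exists V; split => // f Hf; rewrite -S4 // HVa //.
  by apply: contra Hf; apply: S3.
case: (boolP (Iset (sv_opp X) Y :&: W == set0)) => H2; last first.
  case: (IsetW H2) => V1 [e1 [HV1 He1 HIe]].
  rewrite -sep_oppr in He1.
  case: (shrink2 Hs HIe He1) => S1 S2 S3 S4.
  have HY' := compoW HV1 HX.
  have [V [HV HVa]] := IH _ _ (leq_trans S2 Hn) HX HY' (esym S1).
  exists V; split => // f Hf; rewrite HVa //.
  by apply: contra Hf; apply: S3.
exists (sv_sum X (sv_opp Y)); split; first by apply: Pset_L; apply: Pset_intro.
by move=> f Hf; apply: sum_agree.
Qed.

Lemma Ie_supp e X Y V f : V \in Ie e X Y -> seqb (V f) Zer = false -> seqb (X f) Zer = false.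
Proof.
case/IeE => _ H; case Hf: (f \in sep X Y).
- by move: Hf; rewrite sepE; case: (X f); case: (Y f).
- by rewrite H ?Hf.
Qed.

Lemma supp_compI e X Y V : V \in Ie e X Y -> supp (sv_comp V X) = supp X.
Proof.
move=> HV; apply/setP => f; rewrite !suppE compE !signeqE.
move: (Ie_supp (f:=f) HV); case: (V f); case: (X f) => //= H; by have := H erefl.
Qed.

Definition C1res X Y e :=
  (exists V, [/\ V \in Lset, V e = Zer & forall f, f \notin sep X (sv_opp Y) -> V f = X f]) \/
  (exists U, [/\ U \in W, U e = Zer & forall f, f \notin sep X (sv_opp Y) -> U f = X f]) \/
  (exists U, [/\ U \in W, U e = Zer & forall f, f \notin sep X (sv_opp Y) -> U f = sopp (X f)]).

Lemma C1res_mono X Y X' Y' e :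
  (forall f, f \in sep X' (sv_opp Y') -> f \in sep X (sv_opp Y)) ->
  (forall f, f \notin sep X (sv_opp Y) -> X' f = X f) ->
  C1res X' Y' e -> C1res X Y e.
Proof.
move=> Hsub Hag.
have K : forall f, f \notin sep X (sv_opp Y) -> f \notin sep X' (sv_opp Y').
  by move=> f; apply: contra; apply: Hsub.
case=> [[V [H1 H2 H3]]|[[U [H1 H2 H3]]|[U [H1 H2 H3]]]].
- by left; exists V; split => // f Hf; rewrite H3 ?K ?Hag.
- by right; left; exists U; split => // f Hf; rewrite H3 ?K ?Hag.
- by right; right; exists U; split => // f Hf; rewrite H3 ?K ?Hag.
Qed.

Lemma C1 X Y e : X \in W -> Y \in W -> supp X = supp Y -> e \in sep X (sv_opp Y) -> C1res X Y e.
Proof.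
have [n] := ubnP #|sep X (sv_opp Y)|; elim: n X Y => // n IH X Y Hn HX HY Hs He.
case: (boolP (sv_opp X \in W)) => HXn.
  have Hs' : supp (sv_opp X) = supp Y by rewrite supp_opp.
  have He' : e \in sep (sv_opp X) Y by rewrite -sep_oppr.
  case: (A2' HXn HY Hs' He') => U [H1 H2 H3].
  right; right; exists U; split => // f Hf; rewrite H3 ?oppE //.
  by rewrite -sep_oppr.
case: (boolP (sv_opp Y \in W)) => HYn.
  have Hs' : supp X = supp (sv_opp Y) by rewrite supp_opp.
  case: (A2' HX HYn Hs' He) => U [H1 H2 H3].
  by right; left; exists U.
case: (boolP (Iset X (sv_opp Y) :&: W == set0)) => H1; last first.
  case: (IsetW H1) => V1 [e1 [HV1 He1 HIe]].
  have HIe' := HIe; case/IeE: HIe' => HV1e1 HV1a.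
  case: (shrink Hs HIe He1) => S1 S2 S3 S4.
  case E0: (seqb (V1 e) Zer).
    right; left; exists V1; split => //.
    by move: E0; case: (V1 e).
  case E1: (seqb (V1 e) (X e)).
    apply: C1res_mono S3 S4 _.
    apply: IH (leq_trans S2 Hn) (compoW HV1 HY) HY S1 _.
    move: He E1; rewrite !(sepE, compE, oppE).
    by case: (X e); case: (Y e); case: (V1 e).
  (* V1 e = - X e *)
  have HW' := compW HV1 HX.
  have Hs2 : supp X = supp (sv_comp V1 X) by rewrite (supp_compI HIe).
  have He2 : e \in sep X (sv_comp V1 X).
    move: He E0 E1; rewrite !(sepE, compE, oppE).
    by case: (X e); case: (Y e); case: (V1 e).
  case: (A2' HX HW' Hs2 He2) => U [U1 U2 U3].
  right; left; exists U; split => // f Hf; apply: U3.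
  apply: contra Hf; move: (HV1a f); rewrite !(sepE, compE, oppE).
  by case: (X f); case: (Y f); case: (V1 f); sgfin.
case: (boolP (Iset (sv_opp X) Y :&: W == set0)) => H2; last first.
  case: (IsetW H2) => V1 [e1 [HV1 He1 HIe]].
  have HIe' := HIe; case/IeE: HIe' => HV1e1 HV1a.
  rewrite -sep_oppr in He1.
  case: (shrink2 Hs HIe He1) => S1 S2 S3 S4.
  case E0: (seqb (V1 e) Zer).
    right; right; exists V1; split => //.
      by move: E0; case: (V1 e).
    by move=> f Hf; rewrite HV1a ?oppE // -sep_oppr.
  case E1: (seqb (V1 e) (Y e)).
    apply: C1res_mono S3 (fun f _ => erefl) _.
    apply: IH (leq_trans S2 Hn) HX (compoW HV1 HX) (esym S1) _.
    move: He E1; rewrite !(sepE, compE, oppE).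
    by case: (X e); case: (Y e); case: (V1 e).
  have HIe2 : V1 \in Ie e1 Y (sv_opp X) by rewrite Ie_swap // supp_opp.
  have HW' := compW HV1 HY.
  have Hs2 : supp Y = supp (sv_comp V1 Y) by rewrite (supp_compI HIe2).
  have He2 : e \in sep Y (sv_comp V1 Y).
    move: He E0 E1; rewrite !(sepE, compE, oppE).
    by case: (X e); case: (Y e); case: (V1 e).
  case: (A2' HY HW' Hs2 He2) => U [U1 U2 U3].
  right; right; exists U; split => // f Hf.
  have Hf2 : f \notin sep Y (sv_comp V1 Y).
    apply: contra Hf; move: (HV1a f) (suppP' Hs f); rewrite !(sepE, compE, oppE).
    by case: (X f); case: (Y f); case: (V1 f); sgfin.
  rewrite U3 //; move: Hf (suppP' Hs f); rewrite !(sepE, oppE).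
  by case: (X f); case: (Y f); sgfin.
left; exists (sv_sum X (sv_opp Y)); split.
- by apply: Pset_L; apply: Pset_intro.
- exact: sum_zero.
- by move=> f Hf; apply: sum_agree.
Qed.

Section Dsec.
Variables (V V' : svec E) (e : E).
Hypotheses (HV : V \in Lset) (HV' : V' \in Lset) (HsV : supp V = supp V') (He : e \in sep V V').

Definition mu X := #|supp X :\: supp V|.

Lemma mu_lt U X f : (forall g, seqb (U g) Zer = false -> seqb (X g) Zer = false) ->
  f \notin supp V -> seqb (X f) Zer = false -> U f = Zer -> mu U < mu X.
Proof.
move=> Hsub Hf HXf HUf; apply: proper_card; apply/properP; split.
  apply/subsetP => g; rewrite !inE !signeqE => /andP [-> Hg] /=.
  by move: (Hsub g) Hg; case: (U g); case: (X g); sgfin.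
- exists f.
  + rewrite inE Hf /= suppE signeqE; by move: HXf; case: (X f).
  + by rewrite inE !suppE HUf eqxx andbF.
Qed.

Definition pat X Y :=
  [/\ X \in W, Y \in W, supp X = supp Y, (forall Z, Z \in W -> mu X <= mu Z) &
     [/\ (forall f, f \in supp V -> f \notin sep V V' -> X f = V f /\ Y f = sopp (V f)),
     X e = Zer /\ Y e = Zer &
     (forall f, f \notin supp V -> X f = Y f)]].

Definition Dgoal := exists Z, [/\ Z \in Lset, Z e = Zer & forall f, f \notin sep V V' -> Z f = V f].

Lemma Dpat X Y : pat X Y -> Dgoal.
Proof.
have [n] := ubnP #|sep X (sv_opp Y)|; elim: n X Y => // n IH X Y Hn.
case=> HX HY Hs Hmin [HR [HXe HYe] HN].
have Hcontra : forall U f, U \in W -> (forall g, seqb (U g) Zer = false -> seqb (X g) Zer = false) ->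
    f \notin supp V -> seqb (X f) Zer = false -> U f = Zer -> False.
  move=> U f HU Hsub Hf HXf HUf.
  by have := Hmin U HU; rewrite leqNgt (mu_lt Hsub Hf HXf HUf).
case: (boolP (sv_opp X \in W)) => HXn.
  case: (set_0Vmem (supp X :\: supp V)) => [H0|[f]].
  - exists X; split => //; first by apply: sym_L.
    move=> f Hf; case Hf': (f \in supp V); first by case: (HR f Hf' Hf).
    have : f \notin supp X :\: supp V by rewrite H0 inE.
    by rewrite !inE !signeqE; move: Hf'; rewrite suppE signeqE; case: (X f); case: (V f).
  - rewrite !inE !signeqE => /andP [Hf HXf].
    have Hs' : supp (sv_opp X) = supp Y by rewrite supp_opp.
    have Hf2 : f \in sep (sv_opp X) Y.
      move: (HN f); rewrite suppE signeqE Hf => /(_ isT).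
      by rewrite sepE oppE; move: HXf; case: (X f); case: (Y f); sgfin.
    case: (A2' HXn HY Hs' Hf2) => U [U1 U2 U3].
    exfalso; apply: (Hcontra U f U1 _ _ _ U2).
    + move=> g; case Hg: (g \in sep (sv_opp X) Y).
      * by move: Hg; rewrite sepE oppE; case: (X g); case: (Y g).
      * by rewrite U3 ?Hg // oppE; case: (X g).
    + by rewrite suppE signeqE.
    + by move: HXf; case: (X f).
case: (boolP (sv_opp Y \in W)) => HYn.
  case: (set_0Vmem (supp X :\: supp V)) => [H0|[f]].
  - exists (sv_opp Y); split => //; first by apply: sym_L; rewrite ?oppK.
    + by rewrite oppE HYe.
    move=> f Hf; case Hf': (f \in supp V); first by case: (HR f Hf' Hf) => _; rewrite oppE => ->; case: (V f).
    have : f \notin supp X :\: supp V by rewrite H0 inE.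
    rewrite oppE -(HN f); last by rewrite Hf'.
    by rewrite !inE !signeqE; move: Hf'; rewrite suppE signeqE; case: (X f); case: (V f).
  - rewrite !inE !signeqE => /andP [Hf HXf].
    have Hs' : supp X = supp (sv_opp Y) by rewrite supp_opp.
    have Hf2 : f \in sep X (sv_opp Y).
      move: (HN f); rewrite suppE signeqE Hf => /(_ isT).
      by rewrite sepE oppE; move: HXf; case: (X f); case: (Y f); sgfin.
    case: (A2' HX HYn Hs' Hf2) => U [U1 U2 U3].
    exfalso; apply: (Hcontra U f U1 _ _ _ U2).
    + move=> g; case Hg: (g \in sep X (sv_opp Y)).
      * by move: Hg; rewrite sepE oppE; case: (X g); case: (Y g).
      * by rewrite U3 ?Hg.
    + by rewrite suppE signeqE.
    + by move: HXf; case: (X f).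
have Hsv : forall f, f \notin supp V -> V f = Zer.
  by move=> f; rewrite suppE signeqE; case: (V f).
case: (boolP (Iset X (sv_opp Y) :&: W == set0)) => H1; last first.
  case: (IsetW H1) => V1 [e1 [HV1 He1 HIe]].
  have HIe' := HIe; case/IeE: HIe' => HV1e1 HV1a.
  case: (shrink Hs HIe He1) => S1 S2 S3 S4.
  have HV1N : forall f, f \notin supp V -> V1 f = X f.
    move=> f Hf; case Hsep: (f \in sep X (sv_opp Y)); last by rewrite HV1a ?Hsep.
    have HXf : seqb (X f) Zer = false.
      by move: Hsep; rewrite sepE oppE; case: (X f); case: (Y f).
    case EV0: (seqb (V1 f) Zer).
      exfalso; apply: (Hcontra V1 f HV1 _ Hf HXf).
      + by move=> g; apply: Ie_supp HIe.
      + by move: EV0; case: (V1 f).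
    case EV1: (seqb (V1 f) (X f)).
      by move: EV1; case: (V1 f); case: (X f).
    have HW' := compW HV1 HX.
    have Hs2 : supp X = supp (sv_comp V1 X) by rewrite (supp_compI HIe).
    have Hf2 : f \in sep X (sv_comp V1 X).
      move: HXf EV0 EV1; rewrite !(sepE, compE).
      by case: (X f); case: (V1 f).
    case: (A2' HX HW' Hs2 Hf2) => U [U1 U2 U3].
    exfalso; apply: (Hcontra U f U1 _ Hf HXf U2).
    move=> g; case Hg: (g \in sep X (sv_comp V1 X)).
    * by move: Hg; rewrite sepE; case: (X g); case: (sv_comp V1 X g).
    * by rewrite U3 ?Hg.
  apply: (IH _ _ (leq_trans S2 Hn)); split => //.
  - exact: compoW HV1 HY.
  - by rewrite /mu S1 -Hs.
  split.
  - move=> f Hf Hf2; case: (HR f Hf Hf2) => E1 E2; split => //.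
    rewrite S4 // sepE oppE E1 E2.
    by case: (V f).
  - split => //; rewrite S4 //; by rewrite sepE HXe.
  - move=> f Hf; rewrite compE oppE HV1N // HN //.
    by case: (Y f).
case: (boolP (Iset (sv_opp X) Y :&: W == set0)) => H2; last first.
  case: (IsetW H2) => V1 [e1 [HV1 He1 HIe]].
  have HIe' := HIe; case/IeE: HIe' => HV1e1 HV1a.
  have He1' := He1; rewrite -sep_oppr in He1'.
  case: (shrink2 Hs HIe He1') => S1 S2 S3 S4.
  have HIe2 : V1 \in Ie e1 Y (sv_opp X) by rewrite Ie_swap // supp_opp.
  have HV1N : forall f, f \notin supp V -> V1 f = Y f.
    move=> f Hf; case Hsep: (f \in sep (sv_opp X) Y).
    2: { rewrite HV1a ?Hsep // oppE; move: Hsep (HN f Hf); rewrite sepE oppE.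
         by case: (X f); case: (Y f). }
    have HXf : seqb (X f) Zer = false.
      by move: Hsep; rewrite sepE oppE; case: (X f); case: (Y f).
    have HYf : seqb (Y f) Zer = false by rewrite -(HN f Hf).
    case EV0: (seqb (V1 f) Zer).
      exfalso; apply: (Hcontra V1 f HV1 _ Hf HXf).
      + move=> g Hg; have := Ie_supp HIe Hg.
        by rewrite oppE; case: (X g).
      + by move: EV0; case: (V1 f).
    case EV1: (seqb (V1 f) (Y f)).
      by move: EV1; case: (V1 f); case: (Y f).
    have HW' := compW HV1 HY.
    have Hs2 : supp Y = supp (sv_comp V1 Y) by rewrite (supp_compI HIe2).
    have Hf2 : f \in sep Y (sv_comp V1 Y).
      move: HYf EV0 EV1; rewrite !(sepE, compE).
      by case: (Y f); case: (V1 f).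
    case: (A2' HY HW' Hs2 Hf2) => U [U1 U2 U3].
    exfalso; apply: (Hcontra U f U1 _ Hf HXf U2).
    move=> g Hg; rewrite (suppP' Hs g).
    case Hg': (g \in sep Y (sv_comp V1 Y)).
    * by move: Hg'; rewrite sepE; case: (Y g); case: (sv_comp V1 Y g).
    * by rewrite -U3 ?Hg'.
  apply: (IH _ _ (leq_trans S2 Hn)); split => //.
  - exact: compoW HV1 HX.
  split.
  - move=> f Hf Hf2; case: (HR f Hf Hf2) => E1 E2; split => //.
    rewrite S4 // sepE oppE E1 E2.
    by case: (V f).
  - split => //; rewrite S4 //; by rewrite sepE HXe.
  - move=> f Hf; rewrite compE oppE HV1N // -HN //.
    by case: (X f).
exists (sv_sum X (sv_opp Y)); split.
- by apply: Pset_L; apply: Pset_intro.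
- by rewrite sumE oppE HXe HYe.
- move=> f Hf; case Hf': (f \in supp V).
  + case: (HR f Hf' Hf) => E1 E2; rewrite sumE oppE E1 E2.
    by case: (V f).
  + rewrite Hsv ?Hf' // sumE oppE HN ?Hf' //.
    by case: (Y f).
Qed.

Lemma D_main X0 : X0 \in W -> Dgoal.
Proof.
move=> HX0.
case: (arg_minnP mu HX0) => Xm HXm Hmin.
have HVo := L_opp HV; have HV'o := L_opp HV'.
have HA := proj1 ((LsetP V).1 HV Xm HXm).
have HB := proj1 ((LsetP V').1 HV' Xm HXm).
have HA' := proj1 ((LsetP _).1 HVo Xm HXm).
have HB' := proj1 ((LsetP _).1 HV'o Xm HXm).
have Hsz := suppP' HsV.
have HsAB : forall W1 W2, supp W1 = supp W2 -> supp (sv_comp W1 Xm) = supp (sv_comp W2 Xm).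
  move=> W1 W2 H; apply/setP => f; rewrite !suppE !compE !signeqE.
  by move: (suppP' H f); case: (W1 f); case: (W2 f).
have HeAB : e \in sep (sv_comp V Xm) (sv_comp V' Xm).
  by move: He; rewrite !sepE !compE; case: (V e); case: (V' e).
have HeAB' : e \in sep (sv_comp (sv_opp V) Xm) (sv_comp (sv_opp V') Xm).
  by move: He; rewrite !sepE !compE !oppE; case: (V e); case: (V' e).
case: (A2' HA HB (HsAB _ _ HsV) HeAB) => U [U1 U2 U3].
have HsV2 : supp (sv_opp V) = supp (sv_opp V') by rewrite !supp_opp.
case: (A2' HA' HB' (HsAB _ _ HsV2) HeAB') => U' [U1' U2' U3'].
have HU : forall f, ~~ sepb (V f) (V' f) -> U f = scomp (V f) (Xm f).
  move=> f Hf; rewrite U3 ?compE //; move: Hf (Hsz f); rewrite sepE !compE.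
  by case: (V f); case: (V' f); case: (Xm f); sgfin.
have HU' : forall f, ~~ sepb (V f) (V' f) -> U' f = scomp (sopp (V f)) (Xm f).
  move=> f Hf; rewrite U3' ?compE ?oppE //; move: Hf (Hsz f); rewrite sepE !compE !oppE.
  by case: (V f); case: (V' f); case: (Xm f); sgfin.
have HNV : forall f, f \notin supp V -> V f = Zer /\ ~~ sepb (V f) (V' f).
  move=> f; rewrite suppE signeqE; move: (Hsz f).
  by case: (V f); case: (V' f).
have HXN : forall f, f \notin supp V -> sv_comp U U' f = Xm f /\ sv_comp U' U f = Xm f.
  move=> f Hf; case: (HNV f Hf) => H1 H2.
  by rewrite !compE (HU f H2) (HU' f H2) H1; case: (Xm f).
apply: (Dpat (X := sv_comp U U') (Y := sv_comp U' U)); split.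
- exact: compW.
- exact: compW.
- apply/setP => f; rewrite !suppE !compE !signeqE.
  by case: (U f); case: (U' f).
- move=> Z HZ; apply: leq_trans (Hmin Z HZ).
  rewrite /mu; apply: subset_leq_card; apply/subsetP => f.
  rewrite !in_setD => /andP [Hf Hx]; rewrite Hf /=.
  by move: Hx; rewrite !suppE (proj1 (HXN f Hf)).
split.
- move=> f Hf Hf2; have Hf2' : ~~ sepb (V f) (V' f) by rewrite -sepE.
  rewrite !compE (HU f Hf2') (HU' f Hf2').
  by move: Hf; rewrite suppE signeqE; case: (V f).
- by rewrite !compE U2 U2'.
- by move=> f Hf; rewrite !(proj1 (HXN f Hf)) (proj2 (HXN f Hf)).
Qed.

End Dsec.

Lemma WL X V : X \in W -> V \in Lset -> sv_comp X V \in W.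
Proof.
move=> HX HV.
have -> : sv_comp X V = sv_comp X (sv_comp V X).
  by apply/ffunP => f; rewrite !compE; case: (X f); case: (V f).
by apply: compW => //; case: ((LsetP V).1 HV X HX).
Qed.

Lemma LL V V' : V \in Lset -> V' \in Lset -> sv_comp V V' \in Lset.
Proof.
move=> /LsetP H /LsetP H'; apply/LsetP => X HX; rewrite opp_comp -!compA; split.
- by apply: (proj1 (H _ _)); apply: (proj1 (H' _ HX)).
- by apply: (proj2 (H _ _)); apply: (proj2 (H' _ HX)).
Qed.

Lemma L0 : [ffun _ => Zer] \in Lset.
Proof.
apply/LsetP => X HX.
have -> : sv_opp [ffun _ => Zer] = [ffun _ : E => Zer] by apply/ffunP => f; rewrite !ffunE.
have -> : sv_comp [ffun _ => Zer] X = X by apply/ffunP => f; rewrite !ffunE eqxx.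
by [].
Qed.

Definition Ob : {set svec (option E)} :=
  [set Z : svec (option E) | match Z None with
           | Pos => restrict_some Z \in W
           | Neg => sv_opp (restrict_some Z) \in W
           | Zer => restrict_some Z \in Lset end].

Lemma Ob_ext s X : (extv s X \in Ob) = match s with
           | Pos => X \in W
           | Neg => sv_opp X \in W
           | Zer => X \in Lset end.
Proof. by rewrite inE ext_None restrict_ext. Qed.

Lemma ObE (Z : svec (option E)) : (Z \in Ob) = match Z None with
           | Pos => restrict_some Z \in W
           | Neg => sv_opp (restrict_some Z) \in W
           | Zer => restrict_some Z \in Lset end.
Proof. by rewrite inE. Qed.

Lemma Ob_opp (Z : svec (option E)) : Z \in Ob -> sv_opp Z \in Ob.
Proof.
rewrite !ObE restrict_opp oppE; case: (Z None) => //=.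
- by rewrite oppK.
- exact: L_opp.
Qed.

Lemma Ob_comp (Z1 Z2 : svec (option E)) : Z1 \in Ob -> Z2 \in Ob -> sv_comp Z1 Z2 \in Ob.
Proof.
rewrite !ObE restrict_comp compE.
case: (Z1 None); case: (Z2 None) => //= H1 H2.
- exact: compW.
- by rewrite -(oppK (restrict_some Z2)); apply: compoW.
- exact: WL.
- by rewrite opp_comp -(oppK (restrict_some Z2)) oppK; apply: compoW; rewrite ?oppK.
- by rewrite opp_comp; apply: compW.
- by rewrite opp_comp; apply: WL => //; apply: L_opp.
- by case: ((LsetP _).1 H1 _ H2).
- by rewrite opp_comp; case: ((LsetP _).1 (L_opp H1) _ H2); rewrite oppK.
- exact: LL.
Qed.

Lemma corePos (Z1 Z2 : svec (option E)) e : Z1 None = Pos -> Z1 \in Ob -> Z2 \in Ob ->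
  supp Z1 = supp Z2 -> e \in sep Z1 Z2 ->
  exists Z : svec (option E), [/\ Z \in Ob, Z e = Zer & forall f, f \notin sep Z1 Z2 -> Z f = Z1 f].
Proof.
move=> HN1 H1 H2 Hs He.
set X1 := restrict_some Z1; set X2 := restrict_some Z2.
have HX1 : X1 \in W by move: H1; rewrite ObE HN1.
have Hs12 : supp X1 = supp X2 by apply: supp_restrict.
case HN2: (Z2 None).
- move: H2; rewrite ObE HN2 => HX2.
  case: e He => [e'|]; last by rewrite inE HN1 HN2 !signeqE.
  rewrite sep_Some => He'.
  case: (A2' HX1 HX2 Hs12 He') => U [U1 U2 U3].
  exists (extv Pos U); split.
  + by rewrite Ob_ext.
  + by rewrite ext_Some.
  + case=> [h|] Hh; last by rewrite ext_None HN1.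
    by rewrite ext_Some U3 ?restrictE // -sep_Some.
- move: H2; rewrite ObE HN2 => HY.
  set Y := sv_opp X2 in HY.
  have HY2 : sv_opp Y = X2 by rewrite oppK.
  have HsY : supp X1 = supp Y by rewrite supp_opp.
  have HNsep : None \in sep Z1 Z2 by rewrite inE HN1 HN2 !signeqE.
  case: e He => [e'|] He.
  + rewrite sep_Some -/X1 -/X2 -HY2 in He.
    have HSome : forall h V, (forall f, f \notin sep X1 (sv_opp Y) -> V f = X1 f) ->
        Some h \notin sep Z1 Z2 -> V h = Z1 (Some h).
      by move=> h V HV; rewrite sep_Some -/X1 -/X2 -HY2 => /HV ->; rewrite restrictE.
    case: (C1 HX1 HY HsY He) => [[V [V1 V2 V3]]|[[U [U1 U2 U3]]|[U [U1 U2 U3]]]].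
    * exists (extv Zer V); split; first by rewrite Ob_ext.
      - by rewrite ext_Some.
      - by case=> [h|] Hh; [rewrite ext_Some; apply: HSome | rewrite HNsep in Hh].
    * exists (extv Pos U); split; first by rewrite Ob_ext.
      - by rewrite ext_Some.
      - by case=> [h|] Hh; [rewrite ext_Some; apply: HSome | rewrite HNsep in Hh].
    * exists (extv Neg (sv_opp U)); split; first by rewrite Ob_ext oppK.
      - by rewrite ext_Some oppE U2.
      - case=> [h|] Hh; last by rewrite HNsep in Hh.
        rewrite ext_Some; apply: (HSome h (sv_opp U)) => // f Hf.
        by rewrite oppE U3 //; case: (X1 f).
  + case: (C2 HX1 HY HsY) => V [V1 V2].
    exists (extv Zer V); split; first by rewrite Ob_ext.
    * by rewrite ext_None.
    * case=> [h|] Hh; last by rewrite HNsep in Hh.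
      by rewrite ext_Some V2 ?restrictE // HY2 -sep_Some.
- by have := supp_None Hs; rewrite HN1 HN2.
Qed.

Lemma core (Z1 Z2 : svec (option E)) e : Z1 \in Ob -> Z2 \in Ob ->
  supp Z1 = supp Z2 -> e \in sep Z1 Z2 ->
  exists Z : svec (option E), [/\ Z \in Ob, Z e = Zer & forall f, f \notin sep Z1 Z2 -> Z f = Z1 f].
Proof.
move=> H1 H2 Hs He.
case HN1: (Z1 None).
- exact: corePos.
- have HN1' : sv_opp Z1 None = Pos by rewrite oppE HN1.
  have Hs' : supp (sv_opp Z1) = supp (sv_opp Z2) by rewrite !supp_opp.
  have He' : e \in sep (sv_opp Z1) (sv_opp Z2) by rewrite sep_opp.
  case: (corePos HN1' (Ob_opp H1) (Ob_opp H2) Hs' He') => Z [Z1' Z2' Z3'].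
  exists (sv_opp Z); split.
  + exact: Ob_opp.
  + by rewrite oppE Z2'.
  + move=> f Hf; rewrite oppE Z3' ?sep_opp // oppE.
    by case: (Z1 f).
- have HN2 : Z2 None = Zer.
    by have := supp_None Hs; rewrite HN1; case: (Z2 None).
  move: H1 H2; rewrite !ObE HN1 HN2 => HX1 HX2.
  case: e He => [e'|] He; last by move: He; rewrite inE HN1 HN2 !signeqE.
  rewrite sep_Some in He.
  have Hs12 := supp_restrict Hs.
  have [Z [Za Zb Zc]] : exists Z, [/\ Z \in Lset, Z e' = Zer &
      forall f, f \notin sep (restrict_some Z1) (restrict_some Z2) -> Z f = restrict_some Z1 f].
    case: (set_0Vmem W) => [H0|[X0 HX0]].
    + exists [ffun h => if h == e' then Zer else restrict_some Z1 h]; split.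
      * by apply/LsetP => X; rewrite H0 inE.
      * by rewrite ffunE eqxx.
      * move=> f Hf; rewrite ffunE; case: eqP => // Hfe.
        by rewrite Hfe He in Hf.
    + exact: (D_main HX1 HX2 Hs12 He HX0).
  exists (extv Zer Z); split.
  + by rewrite Ob_ext.
  + by rewrite ext_Some.
  + case=> [h|] Hh; last by rewrite ext_None HN1.
    by rewrite ext_Some Zc ?restrictE // -sep_Some.
Qed.

Lemma Ob_OM : is_OM Ob.
Proof.
split.
- rewrite ObE ffunE.
  have -> : restrict_some [ffun _ : option E => Zer] = [ffun _ : E => Zer].
    by apply/ffunP => f; rewrite !ffunE.
  exact: L0.
- exact: Ob_opp.
- exact: Ob_comp.
- move=> X Y HX HY Hs e He.
  case: (core HX HY Hs He) => Z [H1 H2 H3]; exists Z => //; split => //.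
  move=> f Hf; rewrite H3 //; split.
  + by rewrite comp_agree.
  + rewrite comp_agree; first by rewrite (agree Hs).
    * by [].
    * by rewrite sep_sym.
Qed.

Lemma hard : affine_OM W.
Proof.
exists Ob; split; first exact: Ob_OM.
apply/setP => X; apply/idP/imsetP.
- move=> HX; exists (extv Pos X); last by rewrite restrict_ext.
  by rewrite inE Ob_ext ext_None eqxx andbT.
- case=> Z; rewrite inE => /andP [HZ /eqP HN] ->.
  by move: HZ; rewrite ObE HN.
Qed.

End Hard.
Section Easy.
Variable E : finType.
Variable W : {set svec E}.
Variable O : {set svec (option E)}.
Hypothesis HO : is_OM O.
Hypothesis HW : W = [set restrict_some X | X in O & X None == Pos].

Lemma sepO (Z1 Z2 : svec (option E)) o : (o \in sep Z1 Z2) = sepb (Z1 o) (Z2 o).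
Proof. by rewrite inE !signeqE; case: (Z1 o); case: (Z2 o). Qed.
Lemma suppO (Z : svec (option E)) o : (o \in supp Z) = ~~ seqb (Z o) Zer.
Proof. by rewrite inE signeqE. Qed.

Lemma liftW X : X \in W -> exists Z, [/\ Z \in O, Z None = Pos & restrict_some Z = X].
Proof.
by rewrite HW => /imsetP [Z]; rewrite inE => /andP [HZ /eqP HN] ->; exists Z.
Qed.

Lemma toW Z : Z \in O -> Z None = Pos -> restrict_some Z \in W.
Proof. by move=> HZ HN; rewrite HW; apply/imsetP; exists Z => //; rewrite inE HZ HN eqxx. Qed.

Lemma suppPosNeg (Z1 Z2 : svec (option E)) : seqb (Z1 None) Zer = seqb (Z2 None) Zer ->
  supp (restrict_some Z1) = supp (restrict_some Z2) -> supp Z1 = supp Z2.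
Proof.
move=> H1 H2; rewrite -(ext_restrict Z1) -(ext_restrict Z2).
exact: supp_ext.
Qed.

Lemma eA1 : axA1 W.
Proof.
case: HO => _ HO2 HO3 _.
move=> X Y /liftW [Z1 [H1 N1 R1]] /liftW [Z2 [H2 N2 R2]]; split.
- rewrite -R1 -R2 -restrict_comp; apply: toW; first exact: HO3.
  by rewrite compE N1.
- rewrite -R1 -R2 -restrict_opp -restrict_comp; apply: toW; first by apply: HO3 => //; apply: HO2.
  by rewrite compE N1.
Qed.

Lemma eA2 : axA2 W.
Proof.
case: HO => _ HO2 HO3 HO4.
move=> X Y /liftW [Z1 [H1 N1 R1]] /liftW [Z2 [H2 N2 R2]] Hs e He.
have Hs' : supp Z1 = supp Z2 by apply: suppPosNeg; rewrite ?N1 ?N2 ?R1 ?R2.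
have He' : Some e \in sep Z1 Z2 by rewrite sep_Some R1 R2.
case: (HO4 _ _ H1 H2 Hs' _ He') => Z HZ [Ze Zf].
have HNs : None \notin sep Z1 Z2 by rewrite sepO N1 N2.
have ZN : Z None = Pos by rewrite (proj1 (Zf _ HNs)) compE N1.
apply/set0Pn; exists (restrict_some Z); rewrite inE (toW HZ ZN) andbT.
apply/IeE; split; first by rewrite restrictE.
move=> f Hf; have Hf' : Some f \notin sep Z1 Z2 by rewrite sep_Some R1 R2.
rewrite restrictE (proj1 (Zf _ Hf')) (comp_agree Hs' Hf').
by rewrite -restrictE R1.
Qed.

Lemma Iset_contra A B V e : Iset A B :&: W == set0 -> V \in W -> e \in sep A B ->
  V \in Ie e A B -> False.
Proof.
move=> /eqP /setP /(_ V) H HV He HI.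
by move: H; rewrite !inE HV andbT; have -> : V \in Iset A B by apply/bigcupP; exists e.
Qed.

Lemma eA3 : axA3 W.
Proof.
case: HO => _ HO2 HO3 HO4.
apply/subsetP => q /imset2P [p w Hp Hw ->].
case/imset2P: Hp => X Y HX; rewrite !inE => /andP [HY /and3P [/eqP Hs H1 H2]] ->.
move: HX; rewrite inE => /andP [HX _].
move: HY => /andP [HY _].
case: (liftW HX) => Z1 [HZ1 N1 R1].
case: (liftW HY) => Z2 [HZ2 N2 R2].
case: (liftW Hw) => Zw [HZw Nw Rw].
set T2 := sv_opp Z2.
have HT2 : T2 \in O by apply: HO2.
have NT2 : T2 None = Neg by rewrite oppE N2.
have RT2 : restrict_some T2 = sv_opp Y by rewrite restrict_opp R2.
have HsT : supp Z1 = supp T2.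
  by apply: suppPosNeg; rewrite ?N1 ?NT2 // R1 RT2 supp_opp.
have HNs : None \in sep Z1 T2 by rewrite sepO N1 NT2.
case: (HO4 _ _ HZ1 HT2 HsT _ HNs) => Z HZ [ZN Zf].
have Zag : forall h, h \notin sep X (sv_opp Y) -> Z (Some h) = X h.
  move=> h Hh; have Hh' : Some h \notin sep Z1 T2 by rewrite sep_Some R1 RT2.
  by rewrite (proj1 (Zf _ Hh')) (comp_agree HsT Hh') -restrictE R1.
have Hsupp : forall h, seqb (Z (Some h)) Zer = false -> seqb (X h) Zer = false.
  move=> h; case Hh: (h \in sep X (sv_opp Y)); last by rewrite Zag ?Hh.
  by move: Hh; rewrite sepE oppE; case: (X h); case: (Y h).
have HsXY := suppP' Hs.
have HRZ : restrict_some Z = sv_sum X (sv_opp Y).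
  apply/ffunP => h; rewrite restrictE.
  case Hh: (h \in sep X (sv_opp Y)); last by rewrite Zag ?Hh // sum_agree ?Hh.
  rewrite sum_zero //.
  case EZ0: (seqb (Z (Some h)) Zer); first by move: EZ0; case: (Z (Some h)).
  exfalso.
  case EZ1: (seqb (Z (Some h)) (X h)).
  - set T3 := sv_comp Z T2.
    have HT3 : T3 \in O by apply: HO3.
    have NT3 : T3 None = Neg by rewrite compE ZN NT2.
    have HsT3 : supp T3 = supp T2.
      apply: suppPosNeg; first by rewrite NT3 NT2.
      rewrite restrict_comp RT2; apply/setP => g; rewrite !suppE compE !oppE restrictE !signeqE.
      move: (Hsupp g) (HsXY g); case: (Z (Some g)); case: (X g); case: (Y g); sgfin.
    have Hf3 : Some h \in sep T3 T2.
      rewrite sepO compE /T2 oppE -(restrictE Z2) R2; move: EZ0 EZ1 Hh (HsXY h); rewrite sepE oppE.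
      by case: (Z (Some h)); case: (X h); case: (Y h).
    case: (HO4 _ _ HT3 HT2 HsT3 _ Hf3) => Z2' HZ2' [Z2h Z2f].
    have HN3 : None \notin sep T3 T2 by rewrite sepO NT3 NT2.
    have Z2N : Z2' None = Neg by rewrite (proj1 (Z2f _ HN3)) compE NT3.
    have HVW : sv_opp (restrict_some Z2') \in W.
      by rewrite -restrict_opp; apply: toW; [apply: HO2 | rewrite oppE Z2N].
    apply: (Iset_contra H2 HVW (e := h)); first by rewrite -sep_oppr.
    apply/IeE; split; first by rewrite oppE restrictE Z2h.
    move=> g Hg; rewrite -sep_oppr in Hg.
    have Hg' : Some g \notin sep T3 T2.
      rewrite sepO compE /T2 oppE -(restrictE Z2) R2 Zag //; move: Hg (HsXY g); rewrite sepE oppE.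
      by case: (X g); case: (Y g).
    rewrite oppE restrictE (proj1 (Z2f _ Hg')) (comp_agree HsT3 Hg') compE Zag //.
    rewrite /T2 oppE oppE -(restrictE Z2) R2; move: Hg (HsXY g); rewrite sepE oppE.
    by case: (X g); case: (Y g).
  - set T1 := sv_comp Z Z1.
    have HT1 : T1 \in O by apply: HO3.
    have NT1 : T1 None = Pos by rewrite compE ZN N1.
    have HsT1 : supp T1 = supp Z1.
      apply: suppPosNeg; first by rewrite NT1 N1.
      rewrite restrict_comp R1; apply/setP => g; rewrite !suppE compE restrictE !signeqE.
      move: (Hsupp g); case: (Z (Some g)); case: (X g); sgfin.
    have Hf1 : Some h \in sep T1 Z1.
      rewrite sepO compE -restrictE R1; move: EZ0 EZ1 Hh; rewrite sepE oppE.
      by case: (Z (Some h)); case: (X h); case: (Y h).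
    case: (HO4 _ _ HT1 HZ1 HsT1 _ Hf1) => Z1' HZ1' [Z1h Z1f].
    have HN1 : None \notin sep T1 Z1 by rewrite sepO NT1 N1.
    have Z1N : Z1' None = Pos by rewrite (proj1 (Z1f _ HN1)) compE NT1.
    have HVW : restrict_some Z1' \in W by apply: toW.
    apply: (Iset_contra H1 HVW Hh).
    apply/IeE; split; first by rewrite restrictE Z1h.
    move=> g Hg.
    have Hg' : Some g \notin sep T1 Z1.
      by rewrite sepO compE Zag // -restrictE R1; case: (X g).
    rewrite restrictE (proj1 (Z1f _ Hg')) (comp_agree HsT1 Hg') compE Zag //.
    by rewrite -restrictE R1; case: (X g).
rewrite -HRZ -Rw -restrict_comp; apply: toW; first exact: HO3.
by rewrite compE ZN.
Qed.

End Easy.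

Theorem theorem2p1 (E : finType) (W : {set {ffun E -> sign}}) :
  affine_OM W <-> [/\ axA1 W, axA2 W & axA3 W].
Proof.
split.
- case=> O [HO HW]; split; [exact: (eA1 HO HW) | exact: (eA2 HO HW) | exact: (eA3 HO HW)].
- by case=> H1 H2 H3; apply: hard.
Qed.
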